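(* Let $L\subset\mathbb{N}^2$ be a simple planar distributive lattice of rank $d+1$, and let $\lambda$ be the edge-labeling described in the context. Then $\lambda$ is an EL-labeling of $L$.
   Context: $\mathbb{N}^2$ is ordered componentwise. A planar distributive lattice is a finite sublattice $L$ of $\mathbb{N}^2$ with $(0,0)\in L$ such that for any $(i,j)\le(k,\ell)$ in $L$ there is a chain in $L$ from $(i,j)$ to $(k,\ell)$ in which the coordinate sum increases by exactly $1$ at each step; so every covering in $L$ is a horizontal or vertical unit step. $L$ is simple if it has no cut edge (a pair $(a,b)$, $\operatorname{rank} b=\operatorname{rank} a+1$, with $a$ the unique element of its rank and $b$ the unique element of its rank). Let $\mathfrak{c}_0: x_0<\dots<x_{d+1}$, $x_t=(i_t,j_t)$, be the maximal chain with $x_0=(0,0)$, $x_{d+1}=\max L$, such that for every $(k,\ell)\in L$ with $k=i_t$ for some $t$, $\ell\le j_t$. Labeling $\lambda$: the edge $x_t\to x_{t+1}$ gets label $t+1$; if $i_{t+1}=i_t+1$ then all edges $(i_t,j)\to(i_{t+1},j)$ of $L$ get label $t+1$; if $j_{t+1}=j_t+1$ then all edges $(i,j_t)\to(i,j_{t+1})$ of $L$ get label $t+1$. A chain $z_0\to\dots\to z_k$ (each $z_{s+1}$ covering $z_s$) is labeled by $(\lambda(z_0\to z_1),\dots,\lambda(z_{k-1}\to z_k))$, compared lexicographically. An edge-labeling is an EL-labeling if for every interval $[x,y]$ of $L$: (i) there is a unique maximal chain $x=z_0\to\dots\to z_k=y$ of $[x,y]$ with weakly increasing labels, and (ii) every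 other maximal chain of $[x,y]$ has label tuple lexicographically strictly larger than that chain's. *)

(* Defs.v *)
From mathcomp Require Import all_boot all_order.
Set Implicit Arguments. Unset Strict Implicit. Unset Printing Implicit Defensive.

Definition pt := (nat * nat)%type.

Definition le2 (a b : pt) : bool := (a.1 <= b.1) && (a.2 <= b.2).
Definition lt2 (a b : pt) : bool := le2 a b && (a != b).

Definition rk (a : pt) : nat := a.1 + a.2.

Definition unit_step (a b : pt) : bool :=
  (b == (a.1.+1, a.2)) || (b == (a.1, a.2.+1)).

(* A finite subset L of N^2 (given by a list; only membership matters) is a
   planar distributive lattice. *)
Definition planar_distr_lattice (L : seq pt) : Prop :=
  [/\ (0, 0) \in L,
      (forall a b, a \in L -> b \in L -> (minn a.1 b.1, minn a.2 b.2) \in L),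
      (forall a b, a \in L -> b \in L -> (maxn a.1 b.1, maxn a.2 b.2) \in L)
    & (forall a b, a \in L -> b \in L -> le2 a b ->
         exists s : seq pt, [/\ path unit_step a s, last a s = b & all (mem L) s])].

Definition cut_edge (L : seq pt) (a b : pt) : Prop :=
  [/\ a \in L, b \in L, rk b = (rk a).+1,
      (forall c, c \in L -> rk c = rk a -> c = a)
    & (forall c, c \in L -> rk c = rk b -> c = b)].

Definition simple_lattice (L : seq pt) : Prop := forall a b, ~ cut_edge L a b.

Definition coversL (L : seq pt) (a b : pt) : bool :=
  [&& a \in L, b \in L, lt2 a b & ~~ has (fun c => lt2 a c && lt2 c b) L].

Definition is_c0 (L : seq pt) (top : pt) (d : nat) (x : nat -> pt) : Prop :=
  [/\ x 0 = (0, 0), x d.+1 = top,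
      (forall t, t <= d.+1 -> x t \in L),
      (forall t, t <= d -> coversL L (x t) (x t.+1))
    & (forall p, p \in L -> (exists2 t, t <= d.+1 & (x t).1 = p.1) ->
         exists2 t, t <= d.+1 & ((x t).1 = p.1 /\ p.2 <= (x t).2))].

Definition is_lambda (L : seq pt) (d : nat) (x : nat -> pt)
    (lam : pt -> pt -> nat) : Prop :=
  forall t, t <= d ->
    [/\ lam (x t) (x t.+1) = t.+1,
        ((x t.+1).1 = (x t).1.+1 ->
           forall j, ((x t).1, j) \in L -> ((x t.+1).1, j) \in L ->
             lam ((x t).1, j) ((x t.+1).1, j) = t.+1)
      & ((x t.+1).2 = (x t).2.+1 ->
           forall i, (i, (x t).2) \in L -> (i, (x t.+1).2) \in L ->
             lam (i, (x t).2) (i, (x t.+1).2) = t.+1)].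

(* label tuple of the chain a = z_0 -> z_1 -> ... (z = [:: z_1; ...; z_k]) *)
Definition chain_labels (lam : pt -> pt -> nat) (a : pt) (z : seq pt) : seq nat :=
  pairmap lam a z.

Fixpoint lex_lt (s t : seq nat) : bool :=
  match s, t with
  | [::], [::] => false
  | [::], _ :: _ => true
  | _ :: _, [::] => false
  | a :: s', b :: t' => (a < b) || ((a == b) && lex_lt s' t')
  end.

Definition max_chain (L : seq pt) (a b : pt) (z : seq pt) : bool :=
  path (coversL L) a z && (last a z == b).

Definition EL_labeling (L : seq pt) (lam : pt -> pt -> nat) : Prop :=
  forall a b, a \in L -> b \in L -> le2 a b ->
    exists z0, [/\ max_chain L a b z0,
                   sorted leq (chain_labels lam a z0),
                   (forall z, max_chain L a b z ->
                      sorted leq (chain_labels lam a z) -> z = z0)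
                 & (forall z, max_chain L a b z -> z != z0 ->
                      lex_lt (chain_labels lam a z0) (chain_labels lam a z))].

(* Main.v *)
Require Import Defs.
From mathcomp Require Import all_boot all_order.
From mathcomp Require Import zify.
Set Implicit Arguments. Unset Strict Implicit.

Lemma unit_stepP (a b : pt) : unit_step a b -> b = (a.1.+1, a.2) \/ b = (a.1, a.2.+1).
Proof. by case/orP=> /eqP ->; [left|right]. Qed.

Lemma path_unit_rk a s : path unit_step a s ->
  rk (last a s) = rk a + size s /\ le2 a (last a s).
Proof.
elim: s a => [|c s IH] a /=.
  by move=> _; rewrite addn0; split=> //; rewrite /le2 !leqnn.
case/andP=> /unit_stepP Hc /IH [H1 H2]; move: H1 H2.
rewrite /rk /le2; case: Hc => -> /=; case: (last _ _) => u v /= H1 /andP[h1 h2];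
  (split; [lia | apply/andP; split; lia]).
Qed.

Lemma lt2_rk a c : le2 a c -> a <> c -> rk a < rk c.
Proof.
case: a c => u v [p q]; rewrite /le2 /rk /= => /andP[h1 h2] hne.
have : u < p \/ v < q.
  case: (ltnP u p) => h; first by left.
  case: (ltnP v q) => h'; first by right.
  by exfalso; apply: hne; congr pair; apply/eqP; rewrite eqn_leq ?h ?h' ?h1 ?h2.
lia.
Qed.

Section Main.
Variables (L : seq pt) (top : pt) (d : nat) (x : nat -> pt) (lam : pt -> pt -> nat).
Hypothesis HL : planar_distr_lattice L.
Hypothesis Htop : top \in L.
Hypothesis Hle : forall p, p \in L -> le2 p top.
Hypothesis Hc0 : is_c0 L top d x.
Hypothesis Hlam : is_lambda L d x lam.

Lemma unit_cover a b : a \in L -> b \in L -> unit_step a b -> coversL L a b.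
Proof.
move=> aL bL Hs; have [/= Hr' Hl'] : rk (last a [:: b]) = rk a + size [:: b] /\ le2 a (last a [:: b]).
  by apply: path_unit_rk; rewrite /= Hs.
rewrite /coversL aL bL /lt2 Hl' /=; apply/andP; split.
  by apply/eqP=> E; rewrite E in Hr'; lia.
apply/hasPn => c _; apply/negP => /andP[] /andP[h1 /eqP h2] /andP[h3 /eqP h4].
have r1 := lt2_rk h1 h2; have r2 := lt2_rk h3 h4; lia.
Qed.
Lemma cover_unit a b : coversL L a b -> unit_step a b.
Proof.
case/and4P=> aL bL /andP[hab /eqP hne] /hasPn Hn.
case: HL => _ _ _ /(_ a b aL bL hab) [s [Hp Hlast Hall]].
case: s Hp Hlast Hall => [|c s] /=; first by move=> _ E; exfalso; apply: hne.
case/andP=> Hc Hp Hlast /andP[cL _].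
case: s Hp Hlast => [|e s] Hp Hlast; first by rewrite -Hlast.
exfalso.
have [Hr Hl] := path_unit_rk Hp; rewrite Hlast /= in Hr Hl.
have [/= Hr1 Hl1] : rk (last a [:: c]) = rk a + size [:: c] /\ le2 a (last a [:: c]).
  by apply: path_unit_rk; rewrite /= Hc.
move: (Hn c cL); rewrite /lt2 Hl Hl1 /=.
have -> : (a != c) by apply/eqP=> E; rewrite E in Hr1; lia.
have -> : (c != b) by apply/eqP=> E; rewrite E in Hr; lia.
by [].
Qed.

Lemma x_step t : t <= d -> unit_step (x t) (x t.+1).
Proof. by move=> ht; case: Hc0 => _ _ _ /(_ t ht) /cover_unit. Qed.

Lemma x_mono s t : s <= t -> t <= d.+1 -> ((x s).1 <= (x t).1) && ((x s).2 <= (x t).2).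
Proof.
move=> hst; elim: t hst => [|t IH]; first by rewrite leqn0 => /eqP -> _; rewrite !leqnn.
rewrite leq_eqVlt => /orP [/eqP -> _|hst ht]; first by rewrite !leqnn.
have /andP[h1 h2] := IH hst (ltnW ht).
by case: (unit_stepP (x_step ht)) => -> /=; apply/andP; split; lia.
Qed.

Lemma crossing (f : nat -> nat) i n : f 0 <= i -> i < f n ->
  exists2 t, t < n & f t <= i < f t.+1.
Proof.
elim: n => [|n IH] h0 hn; first lia.
case: (ltnP i (f n)) => h.
  by have [t ht ht'] := IH h0 h; exists t => //; lia.
by exists n => //; apply/andP.
Qed.

Lemma lamH i j : (i, j) \in L -> (i.+1, j) \in L ->
  exists t, [/\ t <= d, (x t).1 = i, x t.+1 = (i.+1, (x t).2) & lam (i, j) (i.+1, j) = t.+1].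
Proof.
move=> h1 h2.
have [x0 xtop _ _ _] := Hc0.
have ht := Hle h2; rewrite /le2 /= in ht.
have [t ht1 /andP[ht2 ht3]] : exists2 t, t < d.+1 & (x t).1 <= i < (x t.+1).1.
  by apply: (@crossing (fun t => (x t).1) i d.+1); rewrite ?x0 ?xtop //; case/andP: ht.
have ht1' : t <= d by [].
have Hs := unit_stepP (x_step ht1').
have E1 : (x t).1 = i by case: Hs => E; rewrite E /= in ht3; lia.
have E2 : x t.+1 = (i.+1, (x t).2) by case: Hs => E; rewrite E /= in ht3 *; [rewrite E1|lia].
exists t; split=> //.
have [_ H _] := Hlam ht1'.
have Hc : (x t.+1).1 = (x t).1.+1 by rewrite E2 E1.
by have := H Hc j; rewrite E2 /= E1; apply.
Qed.

Lemma lamV i j : (i, j) \in L -> (i, j.+1) \in L ->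
  exists t, [/\ t <= d, (x t).2 = j, x t.+1 = ((x t).1, j.+1) & lam (i, j) (i, j.+1) = t.+1].
Proof.
move=> h1 h2.
have [x0 xtop _ _ _] := Hc0.
have ht := Hle h2; rewrite /le2 /= in ht.
have [t ht1 /andP[ht2 ht3]] : exists2 t, t < d.+1 & (x t).2 <= j < (x t.+1).2.
  by apply: (@crossing (fun t => (x t).2) j d.+1); rewrite ?x0 ?xtop //; case/andP: ht.
have ht1' : t <= d by [].
have Hs := unit_stepP (x_step ht1').
have E1 : (x t).2 = j by case: Hs => E; rewrite E /= in ht3; lia.
have E2 : x t.+1 = ((x t).1, j.+1) by case: Hs => E; rewrite E /= in ht3 *; [lia|rewrite E1].
exists t; split=> //.
have [_ _ H] := Hlam ht1'.
have Hc : (x t.+1).2 = (x t).2.+1 by rewrite E2 E1.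
by have := H Hc i; rewrite E2 /= E1; apply.
Qed.
Lemma C1 i j i' j' : (i, j) \in L -> (i.+1, j) \in L -> (i', j') \in L -> (i'.+1, j') \in L ->
  i < i' -> lam (i, j) (i.+1, j) < lam (i', j') (i'.+1, j').
Proof.
move=> h1 h2 h3 h4 hi.
have [t [ht E1 E2 ->]] := lamH h1 h2; have [t' [ht' E1' E2' ->]] := lamH h3 h4.
case: (ltnP t t') => // h; exfalso.
have /andP[m _] := x_mono h (leqW ht); lia.
Qed.

Lemma C2 i j i' j' : (i, j) \in L -> (i, j.+1) \in L -> (i', j') \in L -> (i', j'.+1) \in L ->
  j < j' -> lam (i, j) (i, j.+1) < lam (i', j') (i', j'.+1).
Proof.
move=> h1 h2 h3 h4 hi.
have [t [ht E1 E2 ->]] := lamV h1 h2; have [t' [ht' E1' E2' ->]] := lamV h3 h4.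
case: (ltnP t t') => // h; exfalso.
have /andP[_ m] := x_mono h (leqW ht); lia.
Qed.

Lemma C3 i j k l : (i, j.+1) \in L -> (k, j) \in L -> (k, j.+1) \in L ->
  (i, l) \in L -> (i.+1, l) \in L ->
  lam (k, j) (k, j.+1) < lam (i, l) (i.+1, l).
Proof.
move=> h0 h1 h2 h3 h4.
have [s [hs E1 E2 ->]] := lamV h1 h2; have [t [ht F1 F2 ->]] := lamH h3 h4.
case: (ltnP s t) => // h; exfalso.
have [_ _ _ _ H5] := Hc0.
have [|t' ht' [G1 G2]] := H5 _ h0; first by exists t => //; apply: leqW.
rewrite /= in G1 G2.
case: (ltnP t t') => h'.
  have /andP[m _] := x_mono h' ht'; rewrite F2 /= in m; lia.
have /andP[_ m] := x_mono (leq_trans h' h) (leqW hs); rewrite E1 /= in m; lia.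
Qed.

Lemma C4 i j k : (i, j) \in L -> (i.+1, j) \in L -> (i, j.+1) \notin L ->
  (k, j) \in L -> (k, j.+1) \in L ->
  lam (i, j) (i.+1, j) < lam (k, j) (k, j.+1).
Proof.
move=> h1 h2 h0 h3 h4.
have [t [ht F1 F2 ->]] := lamH h1 h2; have [s [hs E1 E2 ->]] := lamV h3 h4.
case: (ltnP t s) => // h; exfalso.
move: h; rewrite leq_eqVlt => /orP[/eqP E|h].
  by move: F1 F2; rewrite -E E2 => F1 [] ; lia.
have /andP[m _] := x_mono h (leqW ht); rewrite F1 E2 /= in m.
have [_ _ H3 _ _] := Hc0; have xs := H3 s.+1 hs.
have [_ _ J _] := HL; have := J _ _ h1 xs; rewrite E2 /=.
have -> : maxn i (x s).1 = i by apply/maxn_idPl.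
have -> : maxn j j.+1 = j.+1 by apply/maxn_idPr.
by rewrite (negbTE h0).
Qed.
Lemma cpath_unit p z : path (coversL L) p z -> path unit_step p z.
Proof. by apply: sub_path => u v; apply: cover_unit. Qed.

Lemma cpath_all p z : path (coversL L) p z -> all (mem L) z.
Proof.
elim: z p => [|c z IH] p //= /andP[/and4P[_ cL _ _] Hp].
by rewrite cL (IH _ Hp).
Qed.

Lemma lex_lt_cons h s t : lex_lt (h :: s) (h :: t) = lex_lt s t.
Proof. by rewrite /= ltnn eqxx. Qed.

Lemma find_vert q z j : path (coversL L) q z -> q.2 <= j < (last q z).2 ->
  exists k, [/\ (k, j) \in L, (k, j.+1) \in L & lam (k, j) (k, j.+1) \in pairmap lam q z].
Proof.
elim: z q => [|r z IH] q /=; first by lia.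
case/andP=> Hc Hp Hj.
have [qL rL _ _] := and4P Hc.
case: (unit_stepP (cover_unit Hc)) => Er.
  have Hj' : r.2 <= j < (last r z).2 by move: Hj; rewrite Er.
  have [k [h1 h2 h3]] := IH r Hp Hj'.
  by exists k; split=> //; rewrite in_cons h3 orbT.
case: (ltnP q.2 j) => hq.
  have Hj' : r.2 <= j < (last r z).2 by move: Hj; rewrite Er /=; lia.
  have [k [h1 h2 h3]] := IH r Hp Hj'.
  by exists k; split=> //; rewrite in_cons h3 orbT.
have Ej : q.2 = j by lia.
exists q.1; move: qL rL; rewrite Er -Ej -surjective_pairing => qL rL.
by split=> //; rewrite in_cons eqxx.
Qed.

Variable b : pt.
Hypothesis bL : b \in L.

Definition next (p : pt) : pt :=
  if ((p.1, p.2.+1) \in L) && (p.2 < b.2) then (p.1, p.2.+1) else (p.1.+1, p.2).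

Lemma next_ok p : p \in L -> le2 p b -> p != b ->
  [/\ next p \in L, le2 (next p) b & unit_step p (next p)].
Proof.
move=> pL hpb /eqP hne.
case: HL => _ _ _ /(_ p b pL bL hpb) [s [Hp Hlast Hall]].
case: s Hp Hlast Hall => [|c s] /=; first by move=> _ E; exfalso; apply: hne.
case/andP=> Hc Hp Hlast /andP[cL _].
have [_ Hl] := path_unit_rk Hp; rewrite Hlast in Hl.
move: hpb Hl; rewrite /next /le2 /unit_step.
case: p pL {hne Hc Hp Hlast} (unit_stepP Hc) => i j pL /= Ec.
case: ifP => [/andP[h1 h2]|/negbT hn] /andP[hb1 hb2] /andP[hl1 hl2].
  by split=> //; [apply/andP; split=> /=; lia | rewrite eqxx orbT].
case: Ec => Ec; rewrite Ec /= in hl1 hl2 cL *; first by split=> //; [apply/andP; split | rewrite eqxx].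
by exfalso; move/negP: hn; apply; rewrite cL /=; lia.
Qed.

Lemma next_cases i j :
  ((((i, j.+1) \in L) && (j < b.2)) /\ next (i, j) = (i, j.+1)) \/
  (~~ (((i, j.+1) \in L) && (j < b.2)) /\ next (i, j) = (i.+1, j)).
Proof. by rewrite /next /=; case: ifP => h; [left|right]. Qed.

Lemma next_sorted p : p \in L -> next p \in L -> next (next p) \in L ->
  lam p (next p) <= lam (next p) (next (next p)).
Proof.
case: p => i j pL.
case: (next_cases i j) => -[c1 ->].
  case: (next_cases i j.+1) => -[c2 ->] qL rL; apply: ltnW.
    by apply: C2.
  by apply: C3.
case: (next_cases i.+1 j) => -[c2 ->] qL rL; apply: ltnW.
  apply: C4 => //; apply/negP => h; move/negP: c1; apply; rewrite h /=.
  by case/andP: c2.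
by apply: C1.
Qed.
Lemma chain_self p z : max_chain L p p z -> z = [::].
Proof.
case/andP=> /cpath_unit Hp /eqP Hl.
have [Hr _] := path_unit_rk Hp; rewrite Hl in Hr.
by case: z Hr {Hp Hl} => //= c z; lia.
Qed.

Lemma chain_le p z : path (coversL L) p z -> le2 p (last p z).
Proof. by move/cpath_unit/path_unit_rk => []. Qed.

Lemma other_step p q' : coversL L p q' -> le2 q' b -> q' != next p ->
  [/\ (p.1, p.2.+1) \in L, p.2 < b.2, next p = (p.1, p.2.+1) & q' = (p.1.+1, p.2)].
Proof.
move=> Hc; have [_ qL _ _] := and4P Hc; move: qL.
case: p Hc => i j Hc /=.
case: (unit_stepP (cover_unit Hc)) => /= -> qL /andP[hb1 hb2];
  case: (next_cases i j) => -[c1 ->] //; rewrite ?eqxx //.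
- by case/andP: c1 => h1 h2 _; split.
- by move=> _; move/negP: c1; case; rewrite qL /=; move: hb2 => /= hb2; lia.
Qed.

Lemma greedy n p : rk b - rk p = n -> p \in L -> le2 p b ->
  exists z0, [/\ max_chain L p b z0, sorted leq (chain_labels lam p z0),
     (forall z, max_chain L p b z -> sorted leq (chain_labels lam p z) -> z = z0),
     (forall z, max_chain L p b z -> z != z0 ->
        lex_lt (chain_labels lam p z0) (chain_labels lam p z))
   & (p != b -> exists z1, z0 = next p :: z1)].
Proof.
have base : exists z0, [/\ max_chain L b b z0, sorted leq (chain_labels lam b z0),
     (forall z, max_chain L b b z -> sorted leq (chain_labels lam b z) -> z = z0),
     (forall z, max_chain L b b z -> z != z0 ->
        lex_lt (chain_labels lam b z0) (chain_labels lam b z))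
   & (b != b -> exists z1, z0 = next b :: z1)].
  exists [::]; split=> //; first by rewrite /max_chain /= eqxx.
  - by move=> z /chain_self.
  - by move=> z /chain_self ->; rewrite eqxx.
  - by rewrite eqxx.
elim: n p => [|n IH] p hn pL hpb; (have [Epb|hne] : p = b \/ p != b by case: eqP; auto); try (by rewrite Epb; exact: base).
  by exfalso; have := lt2_rk hpb (elimN eqP hne); lia.
have [qL qb qu] := next_ok pL hpb hne.
set q := next p in qL qb qu *.
have [/= Hr _] : rk (last p [:: q]) = rk p + size [:: q] /\ le2 p (last p [:: q]).
  by apply: path_unit_rk; rewrite /= qu.
have hq : rk b - rk q = n by lia.
have [z0' [Hm Hs Hu Hlex Hh]] := IH q hq qL qb.
have Hcq : coversL L p q by apply: unit_cover.
exists (q :: z0'); split.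
- by rewrite /max_chain /= Hcq.
- case: (eqVneq q b) => [Eq|hqb].
    by move: Hm; rewrite Eq => /chain_self ->.
  have [z1 Ez] := Hh hqb; move: Hs; rewrite Ez /= => Hs; rewrite Hs andbT.
  have [rL _ _] := next_ok qL qb hqb.
  by apply: next_sorted.
- case=> [|q' z']; first by rewrite /max_chain /= => /eqP E; exfalso; move/eqP: hne.
  case/andP=> /= /andP[Hc Hp] Hl Hsz.
  have [_ q'L _ _] := and4P Hc.
  have q'b : le2 q' b by rewrite -(eqP Hl); apply: chain_le.
  case: (eqVneq q' q) => [Eq|hqq].
    congr (_ :: _) => //; apply: Hu; first by rewrite /max_chain -Eq Hp.
    by rewrite -Eq; apply: path_sorted Hsz.
  exfalso.
  have [h1 h2 Eq Eq'] := other_step Hc q'b hqq.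
  have Hj : q'.2 <= p.2 < (last q' z').2 by rewrite (eqP Hl) Eq' /= leqnn.
  have [k [k1 k2 k3]] := find_vert Hp Hj.
  have := order_path_min leq_trans Hsz.
  move/allP/(_ _ k3).
  have pL' : (p.1, p.2) \in L by rewrite -surjective_pairing.
  rewrite Eq' in q'L.
  have := C3 h1 k1 k2 pL' q'L; rewrite -(surjective_pairing p) Eq' => h h'.
  by rewrite ltnNge h' in h.
- case=> [|q' z']; first by rewrite /max_chain /= => /eqP E; exfalso; move/eqP: hne.
  case/andP=> /= /andP[Hc Hp] Hl Hne.
  have [_ q'L _ _] := and4P Hc.
  have q'b : le2 q' b by rewrite -(eqP Hl); apply: chain_le.
  case: (eqVneq q' q) => [Eq|hqq].
    rewrite /chain_labels Eq /= ltnn eqxx /=; apply: Hlex.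
      by rewrite /max_chain -Eq Hp.
    by apply: contra Hne => /eqP ->; rewrite Eq.
  have [h1 h2 Eq Eq'] := other_step Hc q'b hqq.
  rewrite /chain_labels /= /q Eq Eq'.
  rewrite Eq' in q'L.
  have pL' : (p.1, p.2) \in L by rewrite -surjective_pairing.
  have := C3 h1 pL' h1 pL' q'L; rewrite -(surjective_pairing p) => ->.
  by [].
- by move=> _; exists z0'.
Qed.
End Main.

Theorem proposition6 (L : seq pt) (top : pt) (d : nat)
    (x : nat -> pt) (lam : pt -> pt -> nat) :
  planar_distr_lattice L ->
  simple_lattice L ->
  top \in L -> (forall p, p \in L -> le2 p top) ->
  rk top = d.+1 ->
  is_c0 L top d x ->
  is_lambda L d x lam ->
  EL_labeling L lam.
Proof.
move=> HL _ Htop Hle _ Hc0 Hlam a b aL bL hab.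
have [z0 [H1 H2 H3 H4 _]] := greedy HL Htop Hle Hc0 Hlam bL (erefl (rk b - rk a)) aL hab.
by exists z0.
Qed.
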